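(* For the average-cost MDP $\Lambda$ described in the context, there exists an optimal policy that is deterministic and stationary, i.e., there exists a map $\phi^*:\mathbb{N}^+\to\mathcal{A}$ such that the stationary policy that uses action $\phi^*(s)$ whenever the state is $s$ minimizes $V(\phi)$ over all (possibly history-dependent, randomized) policies $\phi$.
   Context: Fix $N\in\mathbb{N}^+$ vehicle types $\mathcal{N}=\{1,\dots,N\}$. Type $n$ has arrival probability $p_n\in(0,1]$, mean operational cost $c_n\ge 0$ and mean sensing capability $r_n\in(0,1]$. Fix constants $\beta\in(0,1)$ and $\epsilon>0$. The action set is $\mathcal{A}=2^{\mathcal{N}}$ (all subsets of $\mathcal{N}$, including $\emptyset$). For $a\in\mathcal{A}$ define the success probability $Q_\emptyset=0$ and $Q_a=1-\prod_{n\in a}(1-r_np_n)$ for $a\neq\emptyset$, and the expected recruitment cost $E_a=\sum_{n\in a}p_nc_n$ ($E_\emptyset=0$). For a state (age) $\delta\in\mathbb{N}^+$ define the expected freshness gain $G_a(\delta)=Q_a(\delta^2+2\delta)\epsilon-(1+\delta)^2\epsilon$ and the immediate cost $u(\delta,a)=(1-\beta)E_a-\beta G_a(\delta)$. The MDP $\Lambda$ has state space $\mathcal{S}=\mathbb{N}^+$, action space $\mathcal{A}$, and transition probabilities: from state $s$ under action $a$, go to state $1$ with probability $Q_a$ and to state $s+1$ with probability $1-Q_a$. For a policy $\phi$ (choosing action $A(t)$ at time $t$), the average cost is $V(\phi)=\limsup_{T\to\infty}\frac1T\mathbb{E}^\phi\big[\sum_{t=1}^T u(S(t),A(t))\big]$,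 with $S(1)=1$; a policy is optimal if it minimizes $V$. *)

(* Defs.v *)
From HB Require Import structures.
From mathcomp Require Import all_boot all_order all_algebra.
From mathcomp Require Import all_classical all_reals all_analysis.
Set Implicit Arguments. Unset Strict Implicit. Unset Printing Implicit Defensive.
Import Order.TTheory GRing.Theory Num.Theory.
Local Open Scope ring_scope.

Section MDP.
Variables (R : realType) (N : nat) (p c r : 'I_N -> R) (beta eps : R).

(* vehicle types are indexed by 'I_N = {0,...,N-1}; actions are subsets *)
Definition action := {set 'I_N}.

(* success probability Q_a (empty product = 1, so Q_set0 = 0) *)
Definition Qa (a : action) : R := 1 - \prod_(n in a) (1 - r n * p n).

Definition Ea (a : action) : R := \sum_(n in a) p n * c n.

Definition Ga (a : action) (d : nat) : R :=
  Qa a * ((d%:R) ^+ 2 + 2 * d%:R) * eps - (1 + d%:R) ^+ 2 * eps.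

Definition ucost (d : nat) (a : action) : R := (1 - beta) * Ea a - beta * Ga a d.

(* A general (history-dependent, randomized) policy: given the past
   state-action pairs (S(1),A(1)),...,(S(t-1),A(t-1)) and the current state
   S(t), a probability weight on each action. *)
Definition policy := seq (nat * action) -> nat -> action -> R.

Definition is_policy (pi : policy) : Prop :=
  (forall h s a, 0 <= pi h s a) /\ (forall h s, \sum_(a : action) pi h s a = 1).

(* expcost pi T h s = expected total cost of the next T steps, given the
   history h and current state s (transition: to 1 w.p. Q_a, to s+1 w.p. 1-Q_a) *)
Fixpoint expcost (pi : policy) (T : nat) (h : seq (nat * action)) (s : nat) : R :=
  match T with
  | 0 => 0
  | T'.+1 => \sum_(a : action) pi h s a *
      (ucost s a + Qa a * expcost pi T' (rcons h (s, a)) 1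
                 + (1 - Qa a) * expcost pi T' (rcons h (s, a)) s.+1)
  end.

Definition avgcost (pi : policy) : \bar R :=
  limn_esup (fun T : nat => ((expcost pi T.+1 [::] 1) / T.+1%:R)%:E).

Definition stationary (phi : nat -> action) : policy :=
  fun _ s a => if a == phi s then 1 else 0.

End MDP.

(* Main.v *)
Require Import Defs.
From HB Require Import structures.
From mathcomp Require Import all_boot all_order all_algebra.
From mathcomp Require Import all_classical all_reals all_analysis.
From mathcomp Require Import ring lra.
Import Order.TTheory GRing.Theory Num.Theory.
Import numFieldNormedType.Exports.
Local Open Scope ring_scope.

Section Basics.
Variables (R : realType) (N : nat) (p c r : 'I_N -> R) (beta eps : R).
Hypotheses (N0 : (0 < N)%N) (hp : forall n, 0 < p n <= 1) (hc : forall n, 0 <= c n)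
  (hr : forall n, 0 < r n <= 1) (hb : 0 < beta < 1) (he : 0 < eps).

Local Notation Q := (Qa p r).
Local Notation u := (ucost p c r beta eps).

Definition amin (F : action N -> R) := Order.arg_min [set: 'I_N] xpredT F.
Lemma amin_le F a : F (amin F) <= F a.
Proof. by rewrite /amin; case: arg_minP => // i _; apply. Qed.

Lemma rp01 n : 0 <= 1 - r n * p n <= 1.
Proof.
have := hp n; have := hr n => /andP[r0 r1] /andP[p0 p1].
apply/andP; split; last by rewrite lerBlDr lerDl mulr_ge0 // ltW.
rewrite subr_ge0; rewrite -[1]mulr1; apply: ler_pM => //; exact: ltW.
Qed.

Lemma Q01 a : 0 <= Q a <= 1.
Proof.
rewrite /Qa; apply/andP; split.
  by rewrite subr_ge0; apply: prodr_ile1 => n _; exact: rp01.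
rewrite lerBlDr lerDl; apply: prodr_ge0 => n _; by case/andP: (rp01 n).
Qed.
Lemma Q_ge0 a : 0 <= Q a. Proof. by case/andP: (Q01 a). Qed.
Lemma Q_le1 a : Q a <= 1. Proof. by case/andP: (Q01 a). Qed.
Lemma Q1_ge0 a : 0 <= 1 - Q a. Proof. by rewrite subr_ge0 Q_le1. Qed.

Lemma QT_gt0 : 0 < Q [set: 'I_N].
Proof.
rewrite /Qa subr_gt0.
pose n0 : 'I_N := Ordinal N0.
rewrite (bigD1 n0) ?inE //=.
have := hp n0; have := hr n0 => /andP[r0 r1] /andP[p0 p1].
apply: (@le_lt_trans _ _ (1 - r n0 * p n0)).
  rewrite -[X in _ <= X]mulr1; apply: ler_wpM2l; first by case/andP: (rp01 n0).
  by apply: prodr_ile1 => n _; exact: rp01.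
by rewrite ltrBlDr ltrDl mulr_gt0.
Qed.

Definition Kc a := (1 - beta) * Ea p c a + beta * eps.
Lemma Kc_ge0 a : 0 <= Kc a.
Proof.
case/andP: hb => b0 b1.
rewrite /Kc addr_ge0 ?mulr_ge0 ?subr_ge0 ?(ltW b0) ?(ltW b1) ?(ltW he) //.
apply: sumr_ge0 => n _; apply: mulr_ge0 => //; by case/andP: (hp n) => /ltW.
Qed.

Definition bb := beta * eps.
Lemma bb_gt0 : 0 < bb. Proof. by case/andP: hb => b0 _; rewrite mulr_gt0. Qed.

Lemma u_eq s a : u s a = Kc a + bb * (1 - Q a) * (s%:R ^+ 2 + 2 * s%:R).
Proof. rewrite /ucost /Ga /Kc /bb; ring. Qed.

Lemma u_ge0 s a : 0 <= u s a.
Proof.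
rewrite u_eq; apply: addr_ge0; first exact: Kc_ge0.
apply: mulr_ge0; first by apply: mulr_ge0; [exact: ltW bb_gt0|exact: Q1_ge0].
by apply: addr_ge0; [exact: sqr_ge0|apply: mulr_ge0].
Qed.


Definition amax := Order.arg_max [set: 'I_N] xpredT Q.
Definition qs := Q amax.
Lemma Q_le_qs a : Q a <= qs.
Proof. by rewrite /qs /amax; case: arg_maxP => // i _; apply. Qed.
Lemma qs_gt0 : 0 < qs.
Proof. exact: lt_le_trans QT_gt0 (Q_le_qs _). Qed.
Lemma qs_le1 : qs <= 1. Proof. exact: Q_le1. Qed.

Definition astar := Order.arg_min amax (fun a => Q a == qs) Kc.
Lemma astar_spec : Q astar = qs /\ forall a, Q a = qs -> Kc astar <= Kc a.
Proof.
rewrite /astar; case: arg_minP => [|i /eqP Hi Hm]; first by rewrite /qs eqxx.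
by split=> // a /eqP; apply: Hm.
Qed.

Definition Ks := Kc astar.
Definition al := bb * (1 - qs) / qs.
Definition bt := 2 * (1 - qs) * (bb + al) / qs.
Definition gam g := (Ks - g + (1 - qs) * (al + bt)) / qs.
Definition H g (s : nat) := al * s%:R ^+ 2 + bt * s%:R + gam g.

Lemma al_ge0 : 0 <= al.
Proof.
rewrite /al divr_ge0 ?(ltW qs_gt0) // mulr_ge0 ?(ltW bb_gt0) //.
by rewrite subr_ge0 qs_le1.
Qed.
Lemma bt_ge0 : 0 <= bt.
Proof.
rewrite /bt divr_ge0 ?(ltW qs_gt0) // !mulr_ge0 //; last first.
  by rewrite addr_ge0 ?al_ge0 ?(ltW bb_gt0).
by rewrite subr_ge0 qs_le1.
Qed.

Lemma H_eq g s : g + H g s = u s astar + (1 - Q astar) * H g s.+1.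
Proof.
have qn : qs != 0 by rewrite gt_eqF ?qs_gt0.
case: astar_spec => -> _.
rewrite u_eq /H /gam /bt /al /Ks -[s.+1%:R]natr1; case: astar_spec => -> _.
by field.
Qed.

Definition G := Ks + al + bt.
Lemma H_G1 : H G 1 = 0.
Proof.
have qn : qs != 0 by rewrite gt_eqF ?qs_gt0.
rewrite /H /gam /G /bt /al; by field.
Qed.
Lemma G_ge0 : 0 <= G.
Proof. by have := al_ge0; have := bt_ge0; have := Kc_ge0 astar; rewrite /G /Ks; lra. Qed.

Lemma H_ge_gam g s : gam g <= H g s.
Proof.
rewrite /H; have h1 : 0 <= al * s%:R ^+ 2 by rewrite mulr_ge0 ?al_ge0 ?sqr_ge0.
have h2 : 0 <= bt * s%:R by rewrite mulr_ge0 ?bt_ge0.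
lra.
Qed.
Lemma gam_ge g : (Ks - g) / qs <= gam g.
Proof.
rewrite /gam ler_pM2r ?invr_gt0 ?qs_gt0 //.
have : 0 <= (1 - qs) * (al + bt).
  by rewrite mulr_ge0 ?subr_ge0 ?qs_le1 // addr_ge0 ?al_ge0 ?bt_ge0.
lra.
Qed.

Definition Sa a := if Q a < qs then
   Num.trunc ((Ks / (qs - Q a) - (Ks - G) / qs) / bb) else 0%N.
Definition S := (\big[maxn/0%N]_(a : action N) Sa a).+1.


Lemma dom g s a : g <= G -> (S <= s)%N ->
  u s astar + (1 - Q astar) * H g s.+1 <= u s a + (1 - Q a) * H g s.+1.
Proof.
move=> gG Ss; rewrite !u_eq.
case: astar_spec => -> Kmin.
set X := (s%:R ^+ 2 + 2 * s%:R).
have := Q_le_qs a; rewrite le_eqVlt => /orP[/eqP Qe|Qlt].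
  by rewrite Qe lerD2r lerD2r; apply: Kmin.
set Y := bb * X + H g s.+1.
have dpos : 0 < qs - Q a by rewrite subr_gt0.
have HY : Ks <= Y * (qs - Q a).
  rewrite -ler_pdivrMr //.
  have h1 : (Ks - G) / qs <= H g s.+1.
    apply: le_trans (H_ge_gam g s.+1); apply: le_trans (gam_ge g).
    by rewrite ler_pM2r ?invr_gt0 ?qs_gt0 // lerD2l lerN2.
  have h2 : Ks / (qs - Q a) - (Ks - G) / qs <= bb * X.
    have sX : s%:R <= X by rewrite /X -[X in X <= _]add0r lerD ?sqr_ge0 // ler_peMl // ler1n.
    apply: le_trans (ler_wpM2l (ltW bb_gt0) sX).
    rewrite -ler_pdivrMl ?bb_gt0 // mulrC.
    apply: ltW; apply: lt_le_trans (truncnS_gt _) _.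
    rewrite ler_nat; apply: (@leq_trans S); last exact: Ss.
    rewrite /S ltnS. apply: (@leq_trans (Sa a)); last exact: leq_bigmax.
    by rewrite /Sa Qlt.
  rewrite /Y; lra.
rewrite -subr_ge0.
have -> : Kc a + bb * (1 - Q a) * X + (1 - Q a) * H g s.+1 -
   (Ks + bb * (1 - qs) * X + (1 - qs) * H g s.+1) = Kc a - Ks + Y * (qs - Q a)
   by rewrite /Y; ring.
have := Kc_ge0 a; lra.
Qed.

Fixpoint hrec (g : R) (n s : nat) : R :=
  match n with
  | 0%N => H g s
  | n'.+1 => let f := fun a => u s a - g + (1 - Q a) * hrec g n' s.+1 in f (amin f)
  end.

Lemma hrec_le g n s a : hrec g n.+1 s <= u s a - g + (1 - Q a) * hrec g n s.+1.
Proof. exact: (amin_le (fun a => u s a - g + (1 - Q a) * hrec g n s.+1) a). Qed.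

Lemma hrec_ex g n s : exists a, hrec g n.+1 s = u s a - g + (1 - Q a) * hrec g n s.+1.
Proof. by eexists. Qed.

Definition h g s := hrec g (S - s) s.
Lemma h_tail g s : (S <= s)%N -> h g s = H g s.
Proof. by rewrite /h -subn_eq0 => /eqP ->. Qed.
Lemma h_low g s : (s < S)%N -> h g s = hrec g (S - s.+1).+1 s.
Proof. by move=> sS; rewrite /h subnSK. Qed.

Definition phi g s := if (s < S)%N then
  amin (fun a => u s a - g + (1 - Q a) * h g s.+1) else astar.

Lemma acoe_le g s a : g <= G -> g + h g s <= u s a + (1 - Q a) * h g s.+1.
Proof.
move=> gG; case: (ltnP s S) => sS.
  rewrite h_low //; have := hrec_le g (S - s.+1) s a.
  rewrite -/(h g s.+1); lra.
rewrite h_tail // h_tail; last exact: (leq_trans sS).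
have := dom g s a gG sS; have := H_eq g s; lra.
Qed.

Lemma acoe_eq g s : g + h g s = u s (phi g s) + (1 - Q (phi g s)) * h g s.+1.
Proof.
case: (ltnP s S) => sS.
  by rewrite h_low // /phi sS /h /=; ring.
rewrite /phi ltnNge sS /= h_tail // h_tail; last exact: (leq_trans sS).
exact: H_eq.
Qed.

Lemma hrec_le_H g n s : hrec g n s <= H g s.
Proof.
elim: n s => [|n IH] s /=; first by [].
apply: le_trans (hrec_le g n s astar) _.
have := ler_wpM2l (Q1_ge0 astar) (IH s.+1); have := H_eq g s; lra.
Qed.

Definition m0 g := if 0 <= gam g then 0 else gam g.
Lemma m0_le0 g : m0 g <= 0.
Proof. by rewrite /m0; case: ifP => // /negbT; rewrite -ltNge => /ltW. Qed.
Lemma m0_le_H g s : m0 g <= H g s.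
Proof.
apply: le_trans (H_ge_gam g s); rewrite /m0; case: ifP => //.
Qed.

Lemma hrec_ge g n s : 0 <= g -> m0 g - n%:R * g <= hrec g n s.
Proof.
move=> g0; elim: n s => [|n IH] s; first by rewrite mul0r subr0; exact: m0_le_H.
have [a ->] := hrec_ex g n s.
set y := m0 g - n%:R * g.
have y0 : y <= 0.
  rewrite /y; have := m0_le0 g; have : 0 <= n%:R * g by rewrite mulr_ge0.
  lra.
have h1 := ler_wpM2l (Q1_ge0 a) (IH s.+1).
have h2 : Q a * y <= 0 by rewrite mulr_ge0_le0 ?Q_ge0.
have h3 : (1 - Q a) * y = y - Q a * y by ring.
have h4 := u_ge0 s a.
rewrite -natr1 mulrDl mul1r; rewrite -/y in h1.
have ey : y = m0 g - n%:R * g by [].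
clearbody y; lra.
Qed.

Lemma wq a d : `|(1 - Q a) * d| <= `|d|.
Proof. by rewrite normrM ger0_norm ?Q1_ge0 // ler_piMl // lerBlDr lerDl Q_ge0. Qed.

Lemma hrec_lip g g' n s : `|hrec g n s - hrec g' n s| <= (n%:R + qs^-1) * `|g - g'|.
Proof.
have qn : qs != 0 by rewrite gt_eqF ?qs_gt0.
elim: n s => [|n IH] s.
  rewrite add0r /= /H /gam.
  have -> : al * s%:R ^+ 2 + bt * s%:R + (Ks - g + (1 - qs) * (al + bt)) / qs -
     (al * s%:R ^+ 2 + bt * s%:R + (Ks - g' + (1 - qs) * (al + bt)) / qs) = 
     qs^-1 * (g' - g) by field.
  by rewrite normrM ger0_norm ?invr_ge0 ?(ltW qs_gt0) // distrC.
have [a Ea] := hrec_ex g n s.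
have [a' Ea'] := hrec_ex g' n s.
have l1 := hrec_le g n s a'.
have l2 := hrec_le g' n s a.
have w1 := wq a (hrec g n s.+1 - hrec g' n s.+1).
have w2 := wq a' (hrec g n s.+1 - hrec g' n s.+1).
have i1 := IH s.+1.
have e1 : (1 - Q a) * (hrec g n s.+1 - hrec g' n s.+1) =
   (1 - Q a) * hrec g n s.+1 - (1 - Q a) * hrec g' n s.+1 by ring.
have e2 : (1 - Q a') * (hrec g n s.+1 - hrec g' n s.+1) =
   (1 - Q a') * hrec g n s.+1 - (1 - Q a') * hrec g' n s.+1 by ring.
move: w1 w2 i1; rewrite e1 e2 !ler_norml => /andP[w1 w1'] /andP[w2 w2'] /andP[i1 i1'].
have := ler_norml (g - g') `|g - g'|; rewrite lexx => /esym /andP[gg gg'].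
rewrite -natr1 mulrDl mulrDl mul1r.
rewrite Ea Ea' in l1 l2 *.
set L := (n%:R + qs^-1) * `|g - g'| in i1 i1' w1 w1' w2 w2' *.
have dL : `|hrec g n s.+1 - hrec g' n s.+1| <= L by rewrite ler_norml i1 i1'.
have eL : L = n%:R * `|g - g'| + qs^-1 * `|g - g'| by rewrite /L mulrDl.
clearbody L.
apply/andP; split; lra.
Qed.

Lemma lip_cont (f : R -> R) (L : R) :
  (forall x y, `|f x - f y| <= L * `|x - y|) -> continuous f.
Proof.
move=> Hf x; apply/cvgrPdist_lt => e e0.
have L1 : 0 < `|L| + 1 by rewrite ltr_wpDl.
near=> z.
apply: le_lt_trans (Hf x z) _.
apply: (@le_lt_trans _ _ ((`|L| + 1) * `|x - z|)).
  by apply: ler_wpM2r; [exact: normr_ge0|rewrite (le_trans (ler_norm L)) // lerDl].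
rewrite -ltr_pdivlMl //.
near: z; apply: cvgr_dist_lt; last by rewrite mulr_gt0 ?invr_gt0.
exact: cvg_id.
Unshelve. all: by end_near.
Qed.

Lemma exists_g : exists g, 0 <= g <= G /\ h g 1 = 0.
Proof.
pose F := fun g => h g 1.
have cF : continuous F.
  apply: (@lip_cont _ ((S - 1)%N%:R + qs^-1)) => x y; exact: hrec_lip.
have F0 : 0 <= F 0.
  have := hrec_ge 0 (S - 1)%N 1 (lexx 0); rewrite mulr0 subr0.
  have g0 : 0 <= gam 0.
    apply: le_trans (gam_ge 0); rewrite subr0; apply: divr_ge0; [exact: Kc_ge0|exact: ltW qs_gt0].
  by rewrite /m0 g0.
have FG : F G <= 0 by rewrite -H_G1; exact: hrec_le_H.
have hm : Num.min (F 0) (F G) <= 0 <= Num.max (F 0) (F G).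
  by rewrite ge_min le_max FG F0 orbT.
have [g gin Fg] := IVT G_ge0 (continuous_subspaceT cF) hm.
by exists g; move: gin; rewrite in_itv /= => ->.
Qed.

Fixpoint expf (pi : policy R N) (f : nat -> R) (T : nat) (hist : seq (nat * action N)) (s : nat) : R :=
  match T with
  | 0%N => f s
  | T'.+1 => \sum_(a : action N) pi hist s a *
      (Q a * expf pi f T' (rcons hist (s, a)) 1 + (1 - Q a) * expf pi f T' (rcons hist (s, a)) s.+1)
  end.

Local Notation EC := (expcost p c r beta eps).

Lemma sum_pol (pi : policy R N) : is_policy pi -> forall hist s x,
  x = \sum_(a : action N) pi hist s a * x.
Proof. by move=> [_ H1] hist s x; rewrite -mulr_suml H1 mul1r. Qed.

Arguments sum_pol { pi }.

Lemma aff (pi : policy R N) : is_policy pi -> forall hist s A B (X Y : action N -> R),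
  A + B * (\sum_a pi hist s a * X a - \sum_a pi hist s a * Y a) =
  \sum_a pi hist s a * (A + B * (X a - Y a)).
Proof.
move=> Hpi hist s A B X Y.
rewrite -sumrB mulr_sumr {1}(sum_pol Hpi hist s A) -big_split /=.
by apply: eq_bigr => a _; ring.
Qed.

Arguments aff { pi }.

Lemma EC_ge0 (pi : policy R N) : is_policy pi -> forall T hist s, 0 <= EC pi T hist s.
Proof.
move=> [H0 _]; elim=> [|T IH] hist s //=.
apply: sumr_ge0 => a _; apply: mulr_ge0 => //.
apply: addr_ge0; first apply: addr_ge0; first exact: u_ge0.
  by apply: mulr_ge0; [exact: Q_ge0|exact: IH].
by apply: mulr_ge0; [exact: Q1_ge0|exact: IH].
Qed.

Lemma L2 (pi : policy R N) (g : R) (hh : nat -> R) : is_policy pi ->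
  (forall s a, g + hh s <= u s a + Q a * hh 1%N + (1 - Q a) * hh s.+1) ->
  forall T hist s, T%:R * g + hh s <= EC pi T hist s + expf pi hh T hist s.
Proof.
move=> Hpi Hac; elim=> [|T IH] hist s /=; first by rewrite mul0r.
rewrite -big_split /= (sum_pol Hpi hist s (T.+1%:R * g + hh s)).
apply: ler_sum => a _; rewrite -mulrDr; apply: ler_wpM2l; first by case: Hpi.
have i1 := ler_wpM2l (Q_ge0 a) (IH (rcons hist (s, a)) 1%N).
have i2 := ler_wpM2l (Q1_ge0 a) (IH (rcons hist (s, a)) s.+1).
have i3 := Hac s a.
rewrite !mulrDr in i1 i2.
have e : Q a * (T%:R * g) + (1 - Q a) * (T%:R * g) = T%:R * g by ring.
rewrite -natr1 mulrDl mul1r; lra.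
Qed.

Lemma L1 (pi : policy R N) (hh : nat -> R) (C D : R) : is_policy pi -> 0 <= C ->
  (forall s, (1 <= s)%N -> hh s <= C * s%:R ^+ 2 + D) ->
  forall T hist s, expf pi hh T.+1 hist s <= C + D + C / bb * (EC pi T.+1 hist s - EC pi T hist s).
Proof.
move=> Hpi C0 Hh; have bn : bb != 0 by rewrite gt_eqF ?bb_gt0.
elim=> [|T IH] hist s.
  rewrite /= subr0.
  have -> : \sum_(a : action N) pi hist s a * (u s a + Q a * 0 + (1 - Q a) * 0) =
     \sum_(a : action N) pi hist s a * (u s a) - \sum_(a : action N) pi hist s a * 0.
    rewrite [X in _ - X]big1 ?subr0; last by move=> a _; rewrite mulr0.
    by apply: eq_bigr => a _; rewrite !mulr0 !addr0.
  rewrite aff //; apply: ler_sum => a _; apply: ler_wpM2l; first by case: Hpi.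
  have i1 := ler_wpM2l (Q_ge0 a) (Hh 1%N (leqnn 1)).
  have i2 := ler_wpM2l (Q1_ge0 a) (Hh s.+1 (ltn0Sn s)).
  have eu : C / bb * u s a = C / bb * Kc a + C * (1 - Q a) * (s%:R ^+ 2 + 2 * s%:R).
    by rewrite u_eq; field.
  have k0 : 0 <= C / bb * Kc a by rewrite mulr_ge0 ?Kc_ge0 // divr_ge0 // ltW // bb_gt0.
  have e : Q a * (C * 1%:R ^+ 2 + D) + (1 - Q a) * (C * s.+1%:R ^+ 2 + D) =
      C + D + C * (1 - Q a) * (s%:R ^+ 2 + 2 * s%:R) by rewrite -natr1; ring.
  rewrite subr0; lra.
rewrite /=.
rewrite (aff Hpi hist s (C + D) (C / bb)
   (fun a => u s a + Q a * EC pi T.+1 (rcons hist (s, a)) 1 + (1 - Q a) * EC pi T.+1 (rcons hist (s, a)) s.+1)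
   (fun a => u s a + Q a * EC pi T (rcons hist (s, a)) 1 + (1 - Q a) * EC pi T (rcons hist (s, a)) s.+1)).
apply: ler_sum => a _; apply: ler_wpM2l; first by case: Hpi.
have i1 := ler_wpM2l (Q_ge0 a) (IH (rcons hist (s, a)) 1%N).
have i2 := ler_wpM2l (Q1_ge0 a) (IH (rcons hist (s, a)) s.+1).
apply: le_trans (lerD i1 i2) _; rewrite le_eqVlt; apply/orP; left; apply/eqP; ring.
Qed.

Lemma sum_stat (phi0 : nat -> action N) hist s (F : action N -> R) :
  \sum_(a : action N) stationary R phi0 hist s a * F a = F (phi0 s).
Proof.
rewrite (bigD1 (phi0 s)) //= /stationary eqxx mul1r big1 ?addr0 // => a /negbTE ->.
by rewrite mul0r.
Qed.

Lemma Lst (phi0 : nat -> action N) (g hmin : R) (hh : nat -> R) :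
  (forall s, g + hh s = u s (phi0 s) + Q (phi0 s) * hh 1%N + (1 - Q (phi0 s)) * hh s.+1) ->
  (forall s, hmin <= hh s) ->
  forall T hist s, EC (stationary R phi0) T hist s <= T%:R * g + hh s - hmin.
Proof.
move=> Heq Hmin; elim=> [|T IH] hist s /=; first by rewrite mul0r add0r subr_ge0.
rewrite sum_stat.
have i1 := ler_wpM2l (Q_ge0 (phi0 s)) (IH (rcons hist (s, phi0 s)) 1%N).
have i2 := ler_wpM2l (Q1_ge0 (phi0 s)) (IH (rcons hist (s, phi0 s)) s.+1).
have i3 := Heq s.
have e : Q (phi0 s) * (T%:R * g + hh 1%N - hmin) + (1 - Q (phi0 s)) * (T%:R * g + hh s.+1 - hmin)
   = T%:R * g - hmin + (Q (phi0 s) * hh 1%N + (1 - Q (phi0 s)) * hh s.+1) by ring.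
rewrite -natr1 [(T%:R + 1) * g]mulrDl mul1r; lra.
Qed.

Local Open Scope ereal_scope.
Lemma esup_le (x : nat -> \bar R) (l : R) :
  (forall e, (0 < e)%R -> exists n, forall k, (n <= k)%N -> x k <= (l + e)%:E) ->
  limn_esup x <= l%:E.
Proof.
move=> Hx; apply/lee_addgt0Pr => e e0.
have [n Hn] := Hx e e0.
rewrite limn_esup_lim.
have -> : limn (esups x) = ereal_inf (range (esups x)).
  by apply/cvg_lim => //; exact: cvg_esups_inf.
apply: le_trans (ereal_inf_lbound _) _; first by exists n.
apply: ge_ereal_sup => _ [k /= nk <-]; rewrite -EFinD; exact: Hn.
Qed.

Lemma esup_lt (x : nat -> \bar R) (l : R) : limn_esup x < l%:E ->
  exists n m, (m < l)%R /\ forall k, (n <= k)%N -> x k <= m%:E.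
Proof.
rewrite limn_esup_lim.
have -> : limn (esups x) = ereal_inf (range (esups x)).
  by apply/cvg_lim => //; exact: cvg_esups_inf.
move=> /ereal_inf_lt [_ [n _ <-] Hn].
have ub k : (n <= k)%N -> x k <= esups x n.
  by move=> nk; apply: ereal_sup_ubound; exists k.
move: Hn ub; case: (esups x n) => [m| |] Hn ub.
- by exists n, m; split => //; rewrite -lte_fin.
- by [].
- exists n, (l - 1)%R; split; first by rewrite ltrBlDr ltrDl.
  by move=> k nk; apply: le_trans (ub k nk) _; rewrite leNye.
Qed.
Local Close Scope ereal_scope.

Lemma contra_growth (A : nat -> R) (g m cA E0 : R) (n : nat) :
  (m < g) -> 0 < cA ->
  (forall T, 0 <= A T) ->
  (forall T, (n <= T)%N -> A T.+1 <= m * T.+1%:R) ->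
  (forall T, T.+1%:R * g <= A T.+1 + E0 + cA * (A T.+1 - A T)) -> False.
Proof.
move=> mg cA0 A0 Aub Arec.
set d := g - m.
have d0 : 0 < d by rewrite /d subr_gt0.
have inc T : (n <= T)%N -> d * T.+1%:R - E0 <= cA * (A T.+1 - A T).
  move=> nT; have := Arec T; have := Aub T nT.
  have e : d * T.+1%:R = T.+1%:R * g - m * T.+1%:R by rewrite /d; ring.
  lra.
pose M := maxn n.+1 (Num.trunc ((2 * cA * m + E0) / d)).+1.
have nM : (n < M)%N by rewrite /M leq_max leqnn.
have claim j : j%:R * (d * M%:R - E0) <= cA * A (M + j)%N.
  elim: j => [|j IH]; first by rewrite mul0r addn0 mulr_ge0 // ltW.
  have hi := inc (M + j)%N (leq_trans (ltnW nM) (leq_addr _ _)).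
  have hM : d * M%:R <= d * (M + j).+1%:R.
    by rewrite ler_pM2l // ler_nat -addnS leq_addr.
  rewrite addnS.
  have e1 : j.+1%:R * (d * M%:R - E0) = j%:R * (d * M%:R - E0) + (d * M%:R - E0).
    by rewrite -natr1; ring.
  have e2 : cA * (A (M + j).+1 - A (M + j)%N) = cA * A (M + j).+1 - cA * A (M + j)%N by ring.
  lra.
have c2 := claim M.
have ub : A (M + M)%N <= m * (M + M)%:R.
  have -> : (M + M = (M + M).-1.+1)%N by rewrite prednK // addn_gt0 (leq_trans _ nM).
  apply: Aub; rewrite -ltnS prednK ?addn_gt0 ?(leq_trans _ nM) //.
  exact: leq_trans nM (leq_addr _ _).
have c3 : M%:R * (d * M%:R - E0) <= M%:R * (2 * cA * m).
  apply: le_trans c2 _.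
  have := ler_wpM2l (ltW cA0) ub; rewrite natrD.
  have -> : cA * (m * (M%:R + M%:R)) = M%:R * (2 * cA * m) by ring.
  by [].
have Mpos : 0 < M%:R :> R by rewrite ltr0n (leq_trans _ nM).
rewrite ler_pM2l // in c3.
have : (2 * cA * m + E0) / d < M%:R.
  apply: lt_le_trans (truncnS_gt _) _.
  by rewrite ler_nat /M leq_max leqnn orbT.
rewrite ltr_pdivrMr //; lra.
Qed.

Theorem main_sec : exists phi0 : nat -> action N,
    forall pi : policy R N, is_policy pi ->
      (avgcost p c r beta eps (stationary R phi0) <= avgcost p c r beta eps pi)%E.
Proof.
have [g [/andP[g0 gG] hg1]] := exists_g.
pose hh := h g.
have Hac s a : g + hh s <= u s a + Q a * hh 1%N + (1 - Q a) * hh s.+1.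
  by rewrite /hh hg1 mulr0 addr0; exact: acoe_le.
have Heq s : g + hh s = u s (phi g s) + Q (phi g s) * hh 1%N + (1 - Q (phi g s)) * hh s.+1.
  by rewrite /hh hg1 mulr0 addr0; exact: acoe_eq.
pose hmin := m0 g - S%:R * g.
have Hmin s : hmin <= hh s.
  apply: (@le_trans _ _ (m0 g - (S - s)%N%:R * g)); last exact: (hrec_ge g (S - s)%N s g0).
  by rewrite lerD2l lerN2 ler_wpM2r // ler_nat leq_subr.
pose C := al + bt + 1.
pose D := `|gam g|.
have C0 : 0 < C by rewrite /C ltr_wpDl // addr_ge0 ?al_ge0 ?bt_ge0.
have Hup s : (1 <= s)%N -> hh s <= C * s%:R ^+ 2 + D.
  move=> s1; apply: le_trans (hrec_le_H _ _ _) _; rewrite /H /C /D.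
  have ss : s%:R <= s%:R ^+ 2 :> R.
    by rewrite expr2 -{1}[s%:R]mulr1 ler_wpM2l // ler1n.
  have := ler_wpM2l bt_ge0 ss; have := ler_norm (gam g); have := sqr_ge0 (s%:R : R).
  have e : (al + bt + 1) * s%:R ^+ 2 = al * s%:R ^+ 2 + bt * s%:R ^+ 2 + s%:R ^+ 2 by ring.
  lra.
exists (phi g) => pi Hpi.
apply: (@le_trans _ _ g%:E).
  rewrite /avgcost; apply: esup_le => e e0.
  exists (Num.trunc ((- hmin) / e)) => k nk.
  rewrite lee_fin.
  have kpos : 0 < k.+1%:R :> R by rewrite ltr0n.
  rewrite ler_pdivrMr //.
  apply: le_trans (@Lst (phi g) g hmin hh Heq Hmin k.+1 [::] 1%N) _.
  rewrite /hh hg1 addr0.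
  have hm0 : hmin <= 0 by apply: le_trans (Hmin 1%N) _; rewrite /hh hg1.
  have : - hmin / e < k.+1%:R.
    apply: lt_le_trans (truncnS_gt _) _; by rewrite ler_nat ltnS.
  rewrite ltr_pdivrMr // => hk.
  have e1 : (g + e) * k.+1%:R = k.+1%:R * g + e * k.+1%:R by ring.
  have e2 : k.+1%:R * e = e * k.+1%:R by ring.
  lra.
rewrite /avgcost leNgt; apply/negP => /esup_lt [n [m [mg Hm]]].
pose A := fun T => EC pi T [::] 1%N.
apply: (@contra_growth A g m (C / bb) (C + D) n mg).
- by rewrite divr_gt0 ?bb_gt0.
- by move=> T; exact: EC_ge0.
- move=> T nT; have := Hm T nT; rewrite lee_fin ler_pdivrMr ?ltr0n //.
- move=> T; have := @L2 pi g hh Hpi Hac T.+1 [::] 1%N; have := @L1 pi hh C D Hpi (ltW C0) Hup T [::] 1%N.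
  rewrite /hh hg1 addr0 /A; lra.
Qed.

End Basics.

Theorem lemma1 (R : realType) (N : nat) (p c r : 'I_N -> R) (beta eps : R) :
  (0 < N)%N ->
  (forall n, 0 < p n <= 1) ->
  (forall n, 0 <= c n) ->
  (forall n, 0 < r n <= 1) ->
  0 < beta < 1 ->
  0 < eps ->
  exists phi : nat -> action N,
    forall pi : policy R N, is_policy pi ->
      (avgcost p c r beta eps (stationary R phi) <= avgcost p c r beta eps pi)%E.
Proof.
move=> N0 hp hc hr hb he.
exact: (@main_sec R N p c r beta eps N0 hp hc hr hb he).
Qed.
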